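(* Let $R:\ \mu=\rho^{(0)}\to\dots\to\rho^{(l)}=\nu$ be a sequence of diagrams and let $T\in\mathcal{T}(\lambda,R)$. Suppose that $$\prod_{\substack{\alpha\in\lambda\\ T(\alpha)\text{ unbarred}}}\Big(a_{T(\alpha)-\rho(\alpha)_{T(\alpha)}}-a_{T(\alpha)-c(\alpha)}\Big)\neq 0$$ as a polynomial in the independent variables $a_i$. Then $\rho(\alpha)_{T(\alpha)}>c(\alpha)$ for all boxes $\alpha\in\lambda$ with $T(\alpha)$ unbarred.
   Context: $a=(a_i)_{i\in\mathbb{Z}}$ are independent variables. Partitions are identified with Young diagrams; box $(i,j)$ is in row $i$, column $j$; content $c(\alpha)=j-i$. A reverse $\lambda$-tableau is a filling $T$ of $\lambda$ by positive integers weakly decreasing along rows and strictly decreasing down columns. $\rho\to\sigma$ means $\sigma$ is obtained from $\rho$ by adding one box; for $R:\ \mu=\rho^{(0)}\to\dots\to\rho^{(l)}=\nu$, $r_i$ is the row of the box added to $\rho^{(i-1)}$. Column order: columns left to right, within a column bottom to top; $\prec$ is strict precedence. $\mathcal{T}(\lambda,R)$ consists of reverse $\lambda$-tableaux $T$ with chosen boxes $\alpha_1\prec\dots\prec\alpha_l$ such that $T(\alpha_i)=r_i$; those entries are barred, the rest unbarred. For $\alpha$ with $\alpha_i\prec\alpha\prec\alpha_{i+1}$ ($0\le i\le l$, conditions with $\alpha_0,\alpha_{l+1}$ void), $\rho(\alpha)=\rho^{(i)}$, and $\rho(\alpha)_k$ is the length of row $k$ of $\rho(\alpha)$. *)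

(* Defs.v *)
From HB Require Import structures.
From mathcomp Require Import all_boot all_order all_algebra.
Set Implicit Arguments. Unset Strict Implicit. Unset Printing Implicit Defensive.
Import Order.TTheory GRing.Theory Num.Theory.

(* A partition is a weakly decreasing list of positive row lengths;
   rows are numbered from 1: row k of p has length [row_len p k]. *)
Definition is_partition (p : seq nat) : bool := sorted geq p && (0 \notin p).

Definition row_len (p : seq nat) (k : nat) : nat := nth 0 p k.-1.

(* A box is a pair (row i, column j), both 1-indexed. *)
Definition box := (nat * nat)%type.

Definition boxes (p : seq nat) : seq box :=
  [seq (i, j) | i <- iota 1 (size p), j <- iota 1 (row_len p i)].

Definition content (b : box) : int := (b.2%:Z - b.1%:Z)%R.

Definition reverse_tableau (lam : seq nat) (T : nat -> nat -> nat) : Prop :=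
  (forall b, b \in boxes lam -> 0 < T b.1 b.2) /\
  (forall i j, (i, j) \in boxes lam -> (i, j.+1) \in boxes lam ->
      T i j.+1 <= T i j) /\
  (forall i j, (i, j) \in boxes lam -> (i.+1, j) \in boxes lam ->
      T i.+1 j < T i j).

Definition col_prec (a b : box) : bool :=
  (a.2 < b.2) || ((a.2 == b.2) && (b.1 < a.1)).

(* R = (rho^(0), ..., rho^(l)) is a sequence of diagrams each obtained from
   the previous by adding one box; r = (r_1, ..., r_l) are the rows of the
   added boxes (r_i is stored at index i-1). *)
Definition box_seq (R : seq (seq nat)) (r : seq nat) : Prop :=
  0 < size R /\ size r = (size R).-1 /\
  (forall k, k < size R -> is_partition (nth [::] R k)) /\
  (forall i, i < size r ->
     0 < nth 0 r i /\
     nth [::] R i.+1 = incr_nth (nth [::] R i) (nth 0 r i).-1).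

(* T together with chosen boxes alpha_1 < ... < alpha_l (stored in [al])
   is an element of T(lambda, R). *)
Definition in_TlamR (lam : seq nat) (R : seq (seq nat)) (r : seq nat)
    (T : nat -> nat -> nat) (al : seq box) : Prop :=
  reverse_tableau lam T /\
  size al = size r /\
  all (fun b => b \in boxes lam) al /\
  sorted col_prec al /\
  (forall i, i < size al ->
     T (nth (0, 0) al i).1 (nth (0, 0) al i).2 = nth 0 r i).

(* rho(alpha) = rho^(i) where alpha_i < alpha < alpha_{i+1}, i.e. i is the
   number of chosen boxes preceding alpha in column order. *)
Definition rho_at (R : seq (seq nat)) (al : seq box) (b : box) : seq nat :=
  nth [::] R (count (fun a => col_prec a b) al).

(* Main.v *)
Require Import Defs.
From HB Require Import structures.
From mathcomp Require Import all_boot all_order all_algebra.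
From mathcomp Require Import zify.
Import Order.TTheory GRing.Theory Num.Theory.

Lemma col_prec_trans : transitive col_prec.
Proof.
move=> [b1 b2] [a1 a2] [c1 c2]; rewrite /col_prec /=.
case/orP=> [h1|/andP[/eqP e1 h1]]; case/orP=> [h2|/andP[/eqP e2 h2]]; apply/orP.
- by left; lia.
- by left; lia.
- by left; lia.
- by right; apply/andP; split; [apply/eqP; lia | lia].
Qed.

Lemma col_prec_irr b : col_prec b b = false.
Proof. by case: b => b1 b2; rewrite /col_prec /= ltnn eqxx ltnn. Qed.

Lemma mem_boxes lam i j : (i, j) \in boxes lam -> [/\ 0 < i, 0 < j & j <= row_len lam i].
Proof.
case/allpairsPdep => x [y [hx hy [-> ->]]].
move: hx hy; rewrite !mem_iota => /andP[hx1 _] /andP[hy1 hy2]; split => //; lia.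
Qed.

Lemma mem_boxes_left lam i j : (i, j.+2) \in boxes lam -> (i, j.+1) \in boxes lam.
Proof.
case/allpairsPdep => x [y [hx hy [e1 e2]]]; subst x y.
apply/allpairsPdep; exists i, j.+1; split => //.
move: hy; rewrite !mem_iota; lia.
Qed.

Lemma R_mono R r : box_seq R r -> forall t m n, m <= n -> n < size R ->
  row_len (nth [::] R m) t <= row_len (nth [::] R n) t.
Proof.
move=> [hR0 [hsz [hp hinc]]] t m; elim=> [|n IH].
  by rewrite leqn0 => /eqP ->.
rewrite leq_eqVlt => /orP[/eqP -> //| hmn] hn.
apply: (leq_trans (IH hmn (ltnW hn))).
have [_ ->] := hinc n ltac:(rewrite hsz; lia).
by rewrite /row_len nth_incr_nth leq_addl.
Qed.

Lemma part_row p t t' : is_partition p -> t <= t' -> row_len p t' <= row_len p t.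
Proof.
move=> /andP[hs _] htt; rewrite /row_len.
case: (ltnP t'.-1 (size p)) => h; last by rewrite (nth_default _ h).
apply: (sorted_leq_nth (leT := geq)) => //; rewrite ?inE; try lia.
- by move=> x y z /= h1 h2; apply: leq_trans h2 h1.
- by move=> x /=.
Qed.

Lemma count_le (al : seq box) k : sorted col_prec al -> k < size al ->
  count (fun a => col_prec a (nth (0,0) al k)) al <= k.
Proof.
move=> hs hk; set b := nth (0,0) al k.
rewrite -(cat_take_drop k al) count_cat.
have -> : count (fun a => col_prec a b) (drop k al) = 0.
  apply/eqP; rewrite -leqn0 leqNgt -has_count; apply/hasPn => x /(nthP (0,0)) [m hm <-].
  rewrite nth_drop size_drop in hm *.
  case: m hm => [|m] hm; first by rewrite addn0 col_prec_irr.
  apply/negP => h.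
  have h2 : col_prec (nth (0,0) al k) (nth (0,0) al (k + m.+1)).
    apply: (sorted_ltn_nth col_prec_trans) => //; rewrite ?inE.
    - by rewrite -ltn_subRL.
    - by rewrite -addSnnS leq_addr.
  by move: (col_prec_trans _ _ _ h h2); rewrite col_prec_irr.
rewrite addn0; apply: (leq_trans (count_size _ _)); by rewrite size_takel // ltnW.
Qed.

Lemma count_ge (al : seq box) k b : sorted col_prec al -> k < size al ->
  col_prec (nth (0,0) al k) b ->
  k.+1 <= count (fun a => col_prec a b) al.
Proof.
move=> hs hk hb; rewrite -(cat_take_drop k.+1 al) count_cat.
suff: count (fun a => col_prec a b) (take k.+1 al) = k.+1 by move=> ->; apply: leq_addr.
have hsz : size (take k.+1 al) = k.+1 by rewrite size_takel.
rewrite -{2}hsz; apply/eqP; rewrite -all_count; apply/allP => x /(nthP (0,0)) [m hm <-].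
rewrite hsz in hm; rewrite nth_take //.
move: hm; rewrite ltnS leq_eqVlt => /orP[/eqP -> //|hm].
apply: (col_prec_trans _ _ _ _ hb).
apply: (sorted_ltn_nth col_prec_trans) => //; rewrite ?inE; lia.
Qed.

Lemma key lam R r T al :
  is_partition lam -> box_seq R r -> in_TlamR lam R r T al ->
  (forall i j, (i, j) \in boxes lam -> (i, j) \notin al ->
     row_len (rho_at R al (i, j)) (T i j) + i != j) ->
  forall j i, (i, j.+1) \in boxes lam ->
    j.+1 <= row_len (rho_at R al (i, j.+1)) (T i j.+1) + i.
Proof.
move=> hlam hR [hT [hsz [hall [hs hTal]]]] hne; elim=> [|j IH] i hb.
  by have [hi _ _] := mem_boxes _ _ _ hb; rewrite addnC ltn_addr.
have hb' := mem_boxes_left _ _ _ hb.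
have IH' := IH i hb'.
have htt : T i j.+2 <= T i j.+1 by apply: hT.2.1.
move: IH' htt; rewrite /rho_at.
set t := T i j.+2; set t' := T i j.+1 => IH' htt.
set N := count (fun a => col_prec a (i, j.+2)) al.
set C := count (fun a => col_prec a (i, j.+1)) al.
rewrite -/C in IH'.
have [hR0 [hszR [hp hinc]]] := hR.
have hNs : N < size R.
  apply: (leq_ltn_trans (count_size _ _)); rewrite hsz hszR; by case: (size R) hR0.
have h1 : row_len (nth [::] R N) t' <= row_len (nth [::] R N) t.
  by apply: part_row => //; apply: hp.
move: h1 IH'; set X := row_len (nth [::] R N) t; set Y := row_len (nth [::] R N) t'.
move=> h1 IH'.
suff : j.+2 <= Y + i by move=> h; apply: (leq_trans h); rewrite leq_add2r.
case: (boolP ((i, j.+1) \in al)) => hin.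
- set k := index (i, j.+1) al.
  have hk : k < size al by rewrite index_mem.
  have hnth : nth (0,0) al k = (i, j.+1) by rewrite nth_index.
  have hC : C <= k by have := @count_le _ _ hs hk; rewrite hnth.
  have hN : k.+1 <= N.
    have := @count_ge al k (i, j.+2) hs hk; rewrite hnth; apply.
    by rewrite /col_prec /= ltnSn.
  have hrk : nth 0 r k = t' by rewrite -(hTal k hk) hnth.
  have [_ hinck] := hinc k ltac:(by rewrite -hsz).
  have e : row_len (nth [::] R k.+1) t' = (row_len (nth [::] R k) t').+1.
    by rewrite /row_len hinck hrk nth_incr_nth eqxx.
  have m1 := @R_mono _ _ hR t' _ _ hN hNs.
  have m2 := @R_mono _ _ hR t' _ _ hC (ltnW (leq_ltn_trans hN hNs)).
  rewrite e in m1.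
  move: IH' m1 m2; rewrite -/Y.
  set A := row_len (nth [::] R C) t'; set B := row_len (nth [::] R k) t'.
  move=> IH' m1 m2.
  lia.
- have hC : C <= N.
    apply: sub_count => a /= h; apply: (col_prec_trans _ _ _ h).
    by rewrite /col_prec /= ltnSn.
  have hne' := hne i j.+1 hb' hin.
  rewrite /rho_at -/C in hne'.
  have m := @R_mono _ _ hR t' _ _ hC hNs.
  move: IH' hne' m; rewrite -/Y; set A := row_len (nth [::] R C) t'.
  move=> IH' hne' m.
  have : j.+1 < A + i by rewrite ltn_neqAle eq_sym hne' IH'.
  by move=> h; apply: (leq_trans h); rewrite leq_add2r.
Qed.

Theorem lemma2p3 (lam : seq nat) (R : seq (seq nat)) (r : seq nat)
    (T : nat -> nat -> nat) (al : seq box) :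
  is_partition lam ->
  box_seq R r ->
  in_TlamR lam R r T al ->
  (exists a : int -> int,
     (\prod_(b <- boxes lam | b \notin al)
        (a ((T b.1 b.2)%:Z - (row_len (rho_at R al b) (T b.1 b.2))%:Z)
         - a ((T b.1 b.2)%:Z - content b)) != 0)%R) ->
  forall b, b \in boxes lam -> b \notin al ->
    (content b < (row_len (rho_at R al b) (T b.1 b.2))%:Z)%R.
Proof.
move=> hlam hR hin [a ha].
have hne : forall i j, (i, j) \in boxes lam -> (i, j) \notin al ->
     row_len (rho_at R al (i, j)) (T i j) + i != j.
  move=> i j hb hn; move: ha; rewrite prodf_seq_neq0 => /allP /(_ _ hb).
  rewrite hn /= subr_eq0; apply: contra => /eqP e; apply/eqP; congr a.
  move: e; rewrite /content /=; set x := row_len _ _; set y := T i j.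
  move=> e; rewrite -e; lia.
move=> [i [|j]] hb hn; first by have [] := mem_boxes _ _ _ hb.
have k := @key _ _ _ _ _ hlam hR hin hne _ _ hb.
have h := hne _ _ hb hn.
move: k h; rewrite /content /=; set x := row_len _ _.
move=> k h; lia.
Qed.
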